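(* Let $n,p$ be positive integers, $X\in\mathbb{R}^{n\times p}$, $\mathbf y\in\mathbb{R}^n$, $\delta>0$ and $\lambda>0$. The function $g_\lambda:\mathbb{R}^p\to\mathbb{R}$, $g_\lambda(\mathbf w)=f_\lambda(\mathbf t(\mathbf w))$, is continuous at every point $\mathbf w\in\mathbb{R}^p$.
   Context: For $\mathbf t\in[0,1]^p$, $T_{\mathbf t}=\mathrm{Diag}(t_1,\dots,t_p)$, $X_{\mathbf t}=XT_{\mathbf t}$, $L_{\mathbf t}=\frac1n[X_{\mathbf t}^\top X_{\mathbf t}+\delta(I-T_{\mathbf t}^2)]$ with $I$ the $p\times p$ identity, $\widetilde{\boldsymbol\beta}_{\mathbf t}:=L_{\mathbf t}^{+}\left(X_{\mathbf t}^\top\mathbf y/n\right)$ with $L_{\mathbf t}^+$ the Moore–Penrose pseudo-inverse, and $f_\lambda(\mathbf t)=\frac1n\|\mathbf y-X_{\mathbf t}\widetilde{\boldsymbol\beta}_{\mathbf t}\|_2^2+\lambda\sum_{j=1}^p t_j$. The map $\mathbf t(\mathbf w)$ is defined coordinatewise by $t_j(w_j)=1-\exp(-w_j^2)$, $j=1,\dots,p$. *)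

(* Defs.v *)
From HB Require Import structures.
From mathcomp Require Import all_boot all_order all_algebra.
From mathcomp Require Import all_classical all_reals all_analysis.
Set Implicit Arguments. Unset Strict Implicit. Unset Printing Implicit Defensive.
Import Order.TTheory GRing.Theory Num.Theory.
Import numFieldNormedType.Exports.
Local Open Scope ring_scope.
Local Open Scope classical_set_scope.

Section Defs.
Variable R : realType.

Definition penrose_conditions (m k : nat) (A : 'M[R]_(m, k)) (B : 'M[R]_(k, m)) : Prop :=
  [/\ A *m B *m A = A, B *m A *m B = B, (A *m B)^T = A *m B & (B *m A)^T = B *m A].

(* Moore-Penrose pseudo-inverse: the (unique, existing) matrix satisfying the
   Penrose conditions. *)
Definition mp_pinv (m k : nat) (A : 'M[R]_(m, k)) : 'M[R]_(k, m) :=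
  xget 0 (penrose_conditions A).

Definition Tmat (p : nat) (t : 'rV[R]_p) : 'M[R]_p := diag_mx t.

Definition Xt (n p : nat) (X : 'M[R]_(n, p)) (t : 'rV[R]_p) : 'M[R]_(n, p) :=
  X *m Tmat t.

Definition Lt (n p : nat) (X : 'M[R]_(n, p)) (delta : R) (t : 'rV[R]_p) : 'M[R]_p :=
  n%:R^-1 *: ((Xt X t)^T *m Xt X t + delta *: (1%:M - Tmat t *m Tmat t)).

Definition beta_t (n p : nat) (X : 'M[R]_(n, p)) (y : 'cV[R]_n) (delta : R)
  (t : 'rV[R]_p) : 'cV[R]_p :=
  mp_pinv (Lt X delta t) *m (n%:R^-1 *: ((Xt X t)^T *m y)).

Definition sqnorm (n : nat) (v : 'cV[R]_n) : R := \sum_(i < n) v i 0 ^+ 2.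

Definition f_lambda (n p : nat) (X : 'M[R]_(n, p)) (y : 'cV[R]_n) (delta lambda : R)
  (t : 'rV[R]_p) : R :=
  n%:R^-1 * sqnorm (y - Xt X t *m beta_t X y delta t) + lambda * \sum_(j < p) t 0 j.

Definition t_of_w (p : nat) (w : 'rV[R]_p) : 'rV[R]_p :=
  \row_(j < p) (1 - expR (- (w 0 j ^+ 2))).

Definition g_lambda (n p : nat) (X : 'M[R]_(n, p)) (y : 'cV[R]_n) (delta lambda : R)
  (w : 'rV[R]_p) : R :=
  f_lambda X y delta lambda (t_of_w w).

End Defs.

(* Main.v *)
Require Import Defs.
From HB Require Import structures.
From mathcomp Require Import all_boot all_order all_algebra.
From mathcomp Require Import all_classical all_reals all_analysis.
From mathcomp Require Import lra.
Import Order.TTheory GRing.Theory Num.Theory.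
Import numFieldNormedType.Exports.
Local Open Scope ring_scope.

Section Cont.
Variable R : realType.
Variable T : topologicalType.

Definition mg {a b} (M : T -> 'M[R]_(a,b)) := forall i j, continuous (fun x => M x i j).

Lemma cf_sum (I:Type) (r : seq I) (P : pred I) (F : I -> T -> R) :
  (forall i, P i -> continuous (F i)) -> continuous (fun x => \sum_(i <- r | P i) F i x).
Proof.
move=> HF; elim: r => [|a r IH].
  under eq_fun do rewrite big_nil. exact: cst_continuous.
case: (boolP (P a)) => Pa.
  under eq_fun do rewrite big_cons Pa.
  move=> x; exact: (continuousD (HF a Pa x) (IH x)).
under eq_fun do rewrite big_cons (negbTE Pa).
exact: IH.
Qed.

Lemma cf_prod (I:Type) (r : seq I) (P : pred I) (F : I -> T -> R) :
  (forall i, P i -> continuous (F i)) -> continuous (fun x => \prod_(i <- r | P i) F i x).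
Proof.
move=> HF; elim: r => [|a r IH].
  under eq_fun do rewrite big_nil. exact: cst_continuous.
case: (boolP (P a)) => Pa.
  under eq_fun do rewrite big_cons Pa.
  move=> x; exact: (continuousM (HF a Pa x) (IH x)).
under eq_fun do rewrite big_cons (negbTE Pa).
exact: IH.
Qed.

Lemma cfD (f g : T -> R) : continuous f -> continuous g -> continuous (fun x => f x + g x).
Proof. by move=> hf hg x; exact: (continuousD (hf x) (hg x)). Qed.
Lemma cfM (f g : T -> R) : continuous f -> continuous g -> continuous (fun x => f x * g x).
Proof. by move=> hf hg x; exact: (continuousM (hf x) (hg x)). Qed.
Lemma cfN (f : T -> R) : continuous f -> continuous (fun x => - f x).
Proof. by move=> hf x; exact: (continuousN (hf x)). Qed.
Lemma cfC (c : R) : continuous (fun _ : T => c).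
Proof. exact: cst_continuous. Qed.

Lemma mg_mul a b c (A : T -> 'M[R]_(a,b)) (B : T -> 'M[R]_(b,c)) :
  mg A -> mg B -> mg (fun x => A x *m B x).
Proof.
move=> hA hB i j; under eq_fun do rewrite mxE.
by apply: cf_sum => k _; apply: cfM.
Qed.

Lemma mg_add a b (A B : T -> 'M[R]_(a,b)) : mg A -> mg B -> mg (fun x => A x + B x).
Proof. by move=> hA hB i j; under eq_fun do rewrite mxE; apply: cfD. Qed.
Lemma mg_opp a b (A : T -> 'M[R]_(a,b)) : mg A -> mg (fun x => - A x).
Proof. by move=> hA i j; under eq_fun do rewrite mxE; apply: cfN. Qed.
Lemma mg_scale a b (c : R) (A : T -> 'M[R]_(a,b)) : mg A -> mg (fun x => c *: A x).
Proof. by move=> hA i j; under eq_fun do rewrite mxE; apply: cfM => //; apply: cfC. Qed.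
Lemma mg_scalef a b (c : T -> R) (A : T -> 'M[R]_(a,b)) : continuous c -> mg A -> mg (fun x => c x *: A x).
Proof. by move=> hc hA i j; under eq_fun do rewrite mxE; apply: cfM. Qed.
Lemma mg_cst a b (A : 'M[R]_(a,b)) : mg (fun _ => A).
Proof. by move=> i j; apply: cfC. Qed.
Lemma mg_tr a b (A : T -> 'M[R]_(a,b)) : mg A -> mg (fun x => (A x)^T).
Proof. by move=> hA i j; under eq_fun do rewrite mxE; apply: hA. Qed.
Lemma mg_diag a (d : T -> 'rV[R]_a) : mg d -> mg (fun x => diag_mx (d x)).
Proof.
move=> hd i j; under eq_fun do rewrite mxE.
case: (i == j).
  by under eq_fun do rewrite mulr1n; apply: hd.
by under eq_fun do rewrite mulr0n; apply: cfC.
Qed.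
Lemma mg_minor a (A : T -> 'M[R]_a.+1) i0 j0 : mg A -> mg (fun x => row' i0 (col' j0 (A x))).
Proof. by move=> hA i j; under eq_fun do rewrite !mxE; apply: hA. Qed.

Lemma cf_det a (A : T -> 'M[R]_a) : mg A -> continuous (fun x => \det (A x)).
Proof.
move=> hA; rewrite /determinant; apply: cf_sum => s _.
apply: cfM; first exact: cfC.
by apply: cf_prod => i _; apply: hA.
Qed.

Lemma mg_adj a (A : T -> 'M[R]_a) : mg A -> mg (fun x => \adj (A x)).
Proof.
case: a A => [|a] A hA i j; first by case: i.
under eq_fun do rewrite mxE /cofactor.
apply: cfM; first exact: cfC.
exact/cf_det/mg_minor.
Qed.

Lemma mg_inv a (A : T -> 'M[R]_a) : mg A -> (forall x, A x \in unitmx) -> mg (fun x => invmx (A x)).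
Proof.
move=> hA hu.
have -> : (fun x => invmx (A x)) = (fun x => (\det (A x))^-1 *: \adj (A x)).
  by apply: funext => x; rewrite /invmx hu.
apply: mg_scalef; last exact: mg_adj.
move=> x; have hx : \det (A x) != 0 by have := hu x; rewrite unitmxE unitfE.
have H := (@continuousV R T _ x hx (@cf_det _ _ hA x)). exact H.
Qed.
End Cont.
Arguments mg {R T a b} M.

Lemma pinv_unit (R : realType) m (A : 'M[R]_m) : A \in unitmx -> mp_pinv A = invmx A.
Proof.
move=> uA; rewrite /mp_pinv; apply: xget_unique.
  by split; rewrite ?mulmxV ?mulVmx ?mul1mx ?mulmx1 ?trmx1.
move=> B [H1 _ _ _].
have -> : B = invmx A *m (A *m B *m A) *m invmx A.
  by rewrite !mulmxA mulVmx // mul1mx -mulmxA mulmxV // mulmx1.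
by rewrite H1 mulVmx // mul1mx.
Qed.

Lemma t_bounds (R : realType) p (w : 'rV[R]_p) j : 0 <= t_of_w w 0 j < 1.
Proof.
rewrite mxE; have h1 := expR_gt0 (- (w 0 j ^+ 2)).
have h2 : expR (- (w 0 j ^+ 2)) <= 1 by rewrite expR_le1 oppr_le0 sqr_ge0.
apply/andP; split; lra.
Qed.

Lemma Lt_unit (R : realType) n p (X : 'M[R]_(n,p)) (delta : R) (t : 'rV[R]_p) : (0 < n)%N -> 0 < delta ->
  (forall j, 0 <= t 0 j < 1) -> Lt X delta t \in unitmx.
Proof.
move=> hn hd ht; rewrite unitmxE unitfE; apply/negP => /det0P [v vn0 vL].
set A := Xt X t.
pose d := \row_j (1 - t 0 j * t 0 j).
have E : 1%:M - Tmat t *m Tmat t = diag_mx d.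
  rewrite /Tmat mulmx_diag; apply/matrixP => i j; rewrite !mxE.
  by case: eqP => _; rewrite ?mulr1n ?mulr0n ?subr0.
have q : (v *m Lt X delta t *m v^T) 0 0 = 0 by rewrite vL mul0mx mxE.
move: q; rewrite /Lt E -/A.
have -> : v *m (n%:R^-1 *: (A^T *m A + delta *: diag_mx d)) *m v^T =
   n%:R^-1 *: ((v *m A^T) *m (v *m A^T)^T + delta *: (v *m diag_mx d *m v^T)).
  rewrite -scalemxAr -scalemxAl mulmxDr mulmxDl -scalemxAr -scalemxAl.
  by rewrite [(v *m A^T)^T]trmx_mul trmxK !mulmxA.
rewrite mul_mx_diag !mxE.
under eq_bigr do rewrite !mxE.
under [X in _ * (_ + delta * X) = _]eq_bigr do rewrite !mxE.
set S1 := \sum_(i < n) _.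
set S2 := \sum_(i < p) _.
have hS1 : 0 <= S1 by apply: sumr_ge0 => i _; rewrite -expr2 sqr_ge0.
have [k Hk] : exists k, v 0 k != 0.
  apply/existsP; apply: contraNT vn0 => /existsPn H; apply/eqP/rowP => k.
  by rewrite mxE; exact/eqP/negPn/H.
have hS2 : 0 < S2.
  rewrite /S2 (bigD1 k) //=.
  have hdk : 0 < 1 - t 0 k * t 0 k by have /andP[a b] := ht k; nra.
  have hk : 0 < v 0 k * (1 - t 0 k * t 0 k) * v 0 k.
    have hvv : 0 < v 0 k * v 0 k.
      by move: Hk; rewrite neq_lt => /orP[h|h]; [rewrite -mulrNN mulr_gt0 // oppr_gt0 | exact: mulr_gt0].
    by rewrite mulrAC; apply: mulr_gt0.
  have : 0 <= \sum_(i < p | i != k) v 0 i * (1 - t 0 i * t 0 i) * v 0 i.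
    apply: sumr_ge0 => i _.
    have hdi : 0 <= 1 - t 0 i * t 0 i by have /andP[a b] := ht i; nra.
    by rewrite mulrAC; apply: mulr_ge0 => //; rewrite -expr2 sqr_ge0.
  lra.
have hn' : 0 < n%:R^-1 :> R by rewrite invr_gt0 ltr0n.
have : 0 < n%:R^-1 * (S1 + delta * S2).
  by apply: mulr_gt0 => //; nra.
lra.
Qed.

Lemma cf_sq (R : realType) (T : topologicalType) (f : T -> R) :
  continuous f -> continuous (fun x => f x ^+ 2).
Proof. by move=> hf; under eq_fun do rewrite expr2; apply: cfM. Qed.

Theorem corollary1 (R : realType) (n p : nat) (hn : (0 < n)%N) (hp : (0 < p)%N)
  (X : 'M[R]_(n, p)) (y : 'cV[R]_n) (delta lambda : R)
  (hdelta : 0 < delta) (hlambda : 0 < lambda) :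
  forall w : 'rV[R]_p, {for w, continuous (g_lambda X y delta lambda)}.
Proof.
pose T := 'rV[R]_p.
pose tw := fun w : T => t_of_w w.
have hu : forall w : T, Lt X delta (tw w) \in unitmx.
  by move=> w; apply: Lt_unit => // j; exact: t_bounds.
have mgt : mg tw.
  move=> i j; rewrite /tw /t_of_w.
  under eq_fun do rewrite mxE.
  apply: cfD; first exact: cfC.
  apply: cfN => x.
  apply: (continuous_comp (f:=fun w : T => - (w 0 j ^+ 2))); last exact: continuous_expR.
  apply: cfN; apply: cf_sq; exact: coord_continuous.
have mgX : mg (fun w => Xt X (tw w)).
  by apply: mg_mul; [exact: mg_cst | exact: mg_diag].
have mgL : mg (fun w => Lt X delta (tw w)).
  apply: mg_scale; apply: mg_add; first by apply: mg_mul => //; exact: mg_tr.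
  apply: mg_scale; apply: mg_add; first exact: mg_cst.
  by apply: mg_opp; apply: mg_mul; exact: mg_diag.
pose V := fun w : T => y - Xt X (tw w) *m (invmx (Lt X delta (tw w)) *m
   (n%:R^-1 *: ((Xt X (tw w))^T *m y))).
have mgV : mg V.
  apply: mg_add; first exact: mg_cst.
  apply: mg_opp; apply: mg_mul => //; apply: mg_mul; first exact: mg_inv.
  apply: mg_scale; apply: mg_mul; [exact: mg_tr | exact: mg_cst].
have -> : g_lambda X y delta lambda = fun w => n%:R^-1 * sqnorm (V w) + lambda * \sum_(j < p) tw w 0 j.
  apply: funext => w; rewrite /g_lambda /f_lambda /beta_t /V pinv_unit //.
move=> w; move: w; apply: cfD; apply: cfM; try exact: cfC.
  by rewrite /sqnorm; apply: cf_sum => i _; apply: cf_sq.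
by apply: cf_sum => j _.
Qed.
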